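(* Let $\alpha=(a_1,\dots,a_w)$ have $m$ nonempty horizontal lists, and let $1\le t<m$. (1) For every $a_i\in\mathrm{Left}(\mathbb{L}^t_\alpha)$, if $dn_\alpha(a_i)$ exists then $dn_\alpha(a_i)\in\mathrm{Left}(\mathbb{L}^{t+1}_\alpha)$. (2) For every $a_i\in\mathrm{Right}(\mathbb{L}^{t+1}_\alpha)$, $un_\alpha(a_i)\in\mathrm{Right}(\mathbb{L}^t_\alpha)$.
   Context: Let $\alpha=(a_1,\dots,a_w)$ be a finite sequence of real numbers, with items identified by their positions. Increasing subsequences are non-strict. $RL_\alpha(a)$ is the maximum length of an increasing subsequence ending at $a$. The horizontal list $\mathbb{L}^t_\alpha$ is the list of items of rising length $t$, ordered by position. The up neighbor $un_\alpha(a_i)$ (resp. down neighbor $dn_\alpha(a_i)$) is the item $a_j$ with the largest $j<i$ such that $RL_\alpha(a_j)=RL_\alpha(a_i)-1$ (resp. $+1$), if any. Further, $un^0_\alpha(a)=a$ and $un^k_\alpha=un_\alpha\circ un^{k-1}_\alpha$. $\mathrm{Left}(\mathbb{L}^t_\alpha)$ is the sublist of items $a\in\mathbb{L}^t_\alpha$ with $un^{t-1}_\alpha(a)=a_1$, and $\mathrm{Right}(\mathbb{L}^t_\alpha)$ is the sublist of the remaining items. *)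

(* Defs.v *)
(* The sequence alpha = (a_1..a_w) is a : 'I_w -> R with
   R a real domain (generalizes the real numbers; only the order is used).
   Positions are 0-based: position k : 'I_w stands for a_{k+1}. *)
From HB Require Import structures.
From mathcomp Require Import all_boot all_order all_algebra.
Set Implicit Arguments. Unset Strict Implicit. Unset Printing Implicit Defensive.
Import Order.TTheory GRing.Theory Num.Theory.
Local Open Scope ring_scope.

Section Defs.
Variables (R : realDomainType) (w : nat) (a : 'I_w -> R).

Definition incr_subseq (S : {set 'I_w}) : bool :=
  [forall j in S, forall k in S, (j < k)%N ==> (a j <= a k)].

Definition RL (i : 'I_w) : nat :=
  \max_(S : {set 'I_w} | [&& incr_subseq S, i \in S &
                           [forall j in S, (j <= i)%N]]) #|S|.

Definition inL (t : nat) (i : 'I_w) : bool := RL i == t.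

Definition num_lists : nat := size (undup [seq RL i | i <- enum 'I_w]).

Definition un_pred (i j : 'I_w) : bool := ((j < i)%N && ((RL j).+1 == RL i)).
Definition un (i : 'I_w) : option 'I_w :=
  [pick j | un_pred i j && [forall k, un_pred i k ==> (k <= j)%N]].

Definition dn_pred (i j : 'I_w) : bool := ((j < i)%N && (RL j == (RL i).+1)).
Definition dn (i : 'I_w) : option 'I_w :=
  [pick j | dn_pred i j && [forall k, dn_pred i k ==> (k <= j)%N]].

Definition unk (k : nat) (i : 'I_w) : option 'I_w := iter k (obind un) (Some i).

Definition inLeft (t : nat) (i : 'I_w) : bool :=
  inL t i && (omap (@nat_of_ord w) (unk t.-1 i) == Some 0%N).

Definition inRight (t : nat) (i : 'I_w) : bool := inL t i && ~~ inLeft t i.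

End Defs.

(* Main.v *)
Require Import Defs.
From HB Require Import structures.
From mathcomp Require Import all_boot all_order all_algebra.
From mathcomp Require Import zify.
Import Order.TTheory GRing.Theory Num.Theory.
Set Implicit Arguments. Unset Strict Implicit.

Section L.
Variables (R : realDomainType) (w : nat) (a : 'I_w -> R).

Definition RLP (i : 'I_w) (S : {set 'I_w}) :=
  [&& incr_subseq a S, i \in S & [forall j in S, (j <= i)%N]].

Lemma RL_ge (i : 'I_w) S : RLP i S -> (#|S| <= RL a i)%N.
Proof. move=> H; rewrite /RL; exact: (@leq_bigmax_cond _ (fun S => RLP i S) (fun S : {set _} => #|S|) S H). Qed.

Lemma RL_wit (i : 'I_w) : exists S, RLP i S /\ RL a i = #|S|.
Proof.
have : (0 < #|[pred S | RLP i S]|)%N.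
  apply/card_gt0P; exists [set i]; rewrite inE /RLP set11 /=.
  apply/andP; split.
  - by apply/forallP=> j; apply/implyP; rewrite in_set1 => /eqP->;
       apply/forallP=> k; apply/implyP; rewrite in_set1 => /eqP->; rewrite ltnn.
  - by apply/forallP=> j; apply/implyP; rewrite in_set1 => /eqP->.
move=> /(@eq_bigmax_cond _ _ (fun S : {set 'I_w} => #|S|)) [S HS E].
exists S; split; first by rewrite inE in HS.
by rewrite -E /RL; apply: eq_bigl => T; rewrite inE.
Qed.

Lemma RL_pos i : (0 < RL a i)%N.
Proof. case: (RL_wit i) => S [/and3P [_ H _] ->]; apply/card_gt0P; by exists i. Qed.

Lemma incrP (S : {set 'I_w}) : reflect (forall j k : 'I_w, j \in S -> k \in S -> (j < k)%N -> (a j <= a k)%R)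
  (incr_subseq a S).
Proof.
apply: (iffP forallP) => H.
- move=> j k jS kS jk; move: (H j); rewrite jS /= => /forallP/(_ k).
  by rewrite kS jk.
- move=> j; apply/implyP=> jS; apply/forallP=> k; apply/implyP=> kS;
  apply/implyP; exact: H.
Qed.

Lemma RL_lt (k l : 'I_w) : (k < l)%N -> (a k <= a l)%R -> (RL a k < RL a l)%N.
Proof.
move=> kl akl; case: (RL_wit k) => S [/and3P [inc kS le] ->].
have lS : l \notin S.
  apply/negP=> lS; move/forallP: le => /(_ l); rewrite lS /=; lia.
have -> : #|S|.+1 = #|l |: S| by rewrite cardsU1 lS.
apply: RL_ge; rewrite /RLP setU11 /=; apply/andP; split.
- apply/incrP=> j j' ; rewrite !in_setU1 => /orP[/eqP->|jS] /orP[/eqP->|j'S] jj'.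
  + by rewrite ltnn in jj'.
  + move/forallP: le => /(_ j'); rewrite j'S /=; lia.
  + move/forallP: le => /(_ j); rewrite jS /= leq_eqVlt => /orP[/eqP/val_inj->//|jk].
    apply: le_trans akl; exact: (incrP _ inc).
  + exact: (incrP _ inc).
- apply/forallP=> j; apply/implyP; rewrite in_setU1 => /orP[/eqP->//|jS].
  move/forallP: le => /(_ j); rewrite jS /=; lia.
Qed.

Lemma RL_prev (i : 'I_w) : (1 < RL a i)%N ->
  exists k : 'I_w, (k < i)%N && ((RL a k).+1 == RL a i).
Proof.
move=> H; case: (RL_wit i) => S [/and3P [inc iS le] E].
have cS0 : #|S| = #|(S :\ i)|.+1 by rewrite (cardsD1 i S) iS.
have [k0 k0S] : exists k0, k0 \in (S :\ i).
  have : (0 < #|(S :\ i)|)%N by lia.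
  by case/card_gt0P => x; exists x.
case: (arg_maxnP (fun k : 'I_w => (k : nat)) k0S) => k kS kmax.
have kS2 : k \in S :\ i by exact: kS.
move/setD1P: (kS2) => [ki kS'].
have kle : (k < i)%N.
  move/forallP: le => /(_ k); rewrite kS' /= leq_eqVlt => /orP[/eqP/val_inj E'|//].
  by rewrite E' eqxx in ki.
exists k; rewrite kle /=.
have h1 : (#|(S :\ i)| <= RL a k)%N.
  apply: RL_ge; rewrite /RLP kS2 /=; apply/andP; split.
  - apply/incrP=> j j' /setD1P[_ jS] /setD1P[_ j'S]; exact: (incrP _ inc).
  - apply/forallP=> j; apply/implyP=> jS; exact: kmax.
have h2 := RL_lt kle (incrP _ inc _ _ kS' iS kle).
apply/eqP; lia.
Qed.
End L.

Section U.
Variables (R : realDomainType) (w : nat) (a : 'I_w -> R).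

Lemma un_some i j : un a i = Some j ->
  [/\ (j < i)%N, (RL a j).+1 = RL a i & forall k : 'I_w, (k < i)%N -> (RL a k).+1 = RL a i -> (k <= j)%N].
Proof.
rewrite /un; case: pickP => // j' /andP [/andP [ji /eqP E] /forallP H] [<-].
split=> // k ki Ek; move: (H k); rewrite /un_pred ki Ek eqxx; exact.
Qed.

Lemma un_ex i : (1 < RL a i)%N -> exists j, un a i = Some j.
Proof.
move=> /RL_prev [k0 Hk0].
have P0 : un_pred a i k0 by exact: Hk0.
case: (arg_maxnP (fun k : 'I_w => (k : nat)) P0) => j Pj jmax.
rewrite /un; case: pickP => [j' _|/(_ j)]; first by exists j'.
rewrite Pj /=; move/negP; case; apply/forallP=> k; apply/implyP; exact: jmax.
Qed.

Lemma un_mono x y x' y' : RL a x = RL a y -> (x <= y)%N ->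
  un a x = Some x' -> un a y = Some y' -> (x' <= y')%N.
Proof.
move=> E xy /un_some [x'x Ex' _] /un_some [_ _ Hy].
apply: Hy; [lia | by rewrite Ex'].
Qed.

Lemma unk_chain t x y : RL a x = t -> RL a y = t -> (x <= y)%N ->
  forall s, (s < t)%N -> exists x' y', [/\ unk a s x = Some x', unk a s y = Some y',
     RL a x' = t - s, RL a y' = t - s & (x' <= y')%N].
Proof.
move=> Ex Ey xy; elim=> [|s IH] st.
  by exists x, y; rewrite !subn0.
case: IH; first lia.
move=> x1 [y1 [ux uy Rx Ry le1]].
have [x2 ux2] : exists x2, un a x1 = Some x2 by apply: un_ex; lia.
have [y2 uy2] : exists y2, un a y1 = Some y2 by apply: un_ex; lia.
exists x2, y2; split.
- by rewrite /unk iterS -/(unk a s x) ux /=.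
- by rewrite /unk iterS -/(unk a s y) uy /=.
- case/un_some: ux2 => _ E _; lia.
- case/un_some: uy2 => _ E _; lia.
- apply: (un_mono _ le1 ux2 uy2); lia.
Qed.

Lemma unkS s i : unk a s.+1 i = obind (un a) (unk a s i).
Proof. by rewrite /unk iterS. Qed.

Lemma unkSr s i j : un a i = Some j -> unk a s.+1 i = unk a s j.
Proof. by move=> E; rewrite /unk iterSr /= E. Qed.

End U.

Theorem lemma5 (R : realDomainType) (w : nat) (a : 'I_w -> R) (m t : nat) :
  num_lists a = m -> (1 <= t)%N -> (t < m)%N ->
  (forall i : 'I_w, inLeft a t i ->
     forall j : 'I_w, dn a i = Some j -> inLeft a t.+1 j) /\
  (forall i : 'I_w, inRight a t.+1 i ->
     exists j : 'I_w, un a i = Some j /\ inRight a t j).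
Proof.
move=> _ t1 _; split.
- move=> i /andP [/eqP Ri /eqP Li] j.
  rewrite /dn; case: pickP => // j' /andP [/andP [ji /eqP Rj] _] [<-].
  have [k uk] : exists k, un a j' = Some k by apply: un_ex; lia.
  case/un_some: (uk) => kj Rk _.
  apply/andP; split; first by rewrite /inL Rj Ri.
  rewrite /= -[t in unk _ t _](ltn_predK t1) (unkSr _ uk).
  have Rk' : RL a k = t by lia.
  case: (unk_chain Rk' Ri (ltnW (leq_trans kj (ltnW ji))) (s := t.-1)); first lia.
  move=> x' [y' [ux uy _ _ le]].
  rewrite ux; rewrite uy /= in Li; case: Li => Ly.
  by rewrite /=; apply/eqP; congr Some; lia.
- move=> i /andP [/eqP Ri nL].
  have [j uj] : exists j, un a i = Some j by apply: un_ex; lia.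
  exists j; split => //.
  case/un_some: (uj) => _ Rj _.
  apply/andP; split; first by apply/eqP; lia.
  apply: contra nL => /andP [_ H]; rewrite /inLeft /inL Ri eqxx /=.
  by rewrite -[t in unk _ t _](ltn_predK t1) (unkSr _ uj).
Qed.
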